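(* In the setting below, under one of the mechanisms (g), (mp), (mn) with corresponding label $\square$, for each $1\le k\le n_1$ let $\mathcal I^\alpha_{\texttt t,k}=\{c\in\mathbb R:\tilde p^{\square}_{\texttt t,k,c}>\alpha\}$. Then $\mathcal I^\alpha_{\texttt t,k}$ is a $1-\alpha$ prediction set for $\tau_{\texttt t(k)}$ (i.e. $\mathbb P(\tau_{\texttt t(k)}\in\mathcal I^\alpha_{\texttt t,k})\ge1-\alpha$), it is a one-sided interval of the form $[\hat\tau_{\texttt t(k)},\infty)$ or $(\hat\tau_{\texttt t(k)},\infty)$ with $\hat\tau_{\texttt t(k)}=\inf\mathcal I^\alpha_{\texttt t,k}$, and these sets are simultaneously valid: $\mathbb P\big(\tau_{\texttt t(k)}\in\mathcal I^\alpha_{\texttt t,k}\text{ for all }1\le k\le n_1\big)\ge1-\alpha$.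
   Context: There are $n$ units with fixed potential outcomes $Y_i^\star(0),Y_i^\star(1)\in\mathbb R$ and fixed potential missingness indicators $M_i(0),M_i(1)\in\{0,1\}$; $\tau_i=Y_i^\star(1)-Y_i^\star(0)$. $\boldsymbol Z\in\{0,1\}^n$ is from a completely randomized experiment (CRE): uniform over vectors with exactly $n_1$ ones ($n_1,n_0\ge1$ fixed, $n_1+n_0=n$), independent of all potential quantities. $M_i=Z_iM_i(1)+(1-Z_i)M_i(0)$; the realized outcome $Z_iY_i^\star(1)+(1-Z_i)Y_i^\star(0)$ is observed, denoted $Y_i$, iff $M_i=1$. $\tau_{\texttt t(1)}\le\dots\le\tau_{\texttt t(n_1)}$ are the sorted values of $\{\tau_i:Z_i=1\}$. Mechanisms: (g) $M_i(1),M_i(0)$ arbitrary constants; (mp) $M_i(1)\ge M_i(0)$ for all $i$; (mn) $M_i(1)\le M_i(0)$ for all $i$. Statistics: $\overline{\mathbb R}=\mathbb R\cup\{\pm\infty\}$; $\psi_{i,j}(y,y')=\mathbf 1\{y>y'\}+\mathbf 1\{y=y'\}\mathbf 1\{i\ge j\}$; $\mathrm{rank}_i(\boldsymbol y)=\sum_j\psi_{i,j}(y_i,y_j)$; $\phi$ nondecreasing on the nonnegative integers; $t_{\mathrm R,\phi}(\boldsymbol z,\boldsymbol y)$ is either $\sum_i z_i\phi(\mathrm{rank}_i(\boldsymbol y))$ or $\sum_i z_i\phi(\sum_j(1-z_j)\psi_{i,j}(y_i,y_j))$; $G_{\mathrm R,\phi}(c)=\mathbb P(t_{\mathrm R,\phi}(\boldsymbol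 A,\boldsymbol y_0)\ge c)$, $\boldsymbol A$ from the CRE, $\boldsymbol y_0\in\mathbb R^n$ any fixed vector. p-values: for $\boldsymbol\delta\in\mathbb R^n$, $\tilde{\boldsymbol Y}^{\square}_{\boldsymbol Z,\boldsymbol\delta}(0)\in\overline{\mathbb R}^n$ has coordinate $Y_i-\delta_i$ if $Z_i=M_i=1$, $Y_i$ if $Z_i=0,M_i=1$; if $Z_i=1,M_i=0$ it is $-\infty,+\infty,-\infty$ for $\square=\texttt g,\texttt{mp},\texttt{mn}$; if $Z_i=0,M_i=0$ it is $+\infty,+\infty,-\infty$ respectively. With $\mathcal J=\{i:Z_i=M_i=1\}=\{j_1,\dots,j_{n_{11}}\}$ ordered so that $\psi_{j_{l+1},j_l}(Y_{j_{l+1}},Y_{j_l})=1$, $\mathcal J_L=\{j_{n_{11}-L+1},\dots,j_{n_{11}}\}$, $\mathcal J_0=\emptyset$, and fixed $\kappa>0$, let $\xi_{k,c,i}=\max_{l:Z_l=M_l=1}Y_l-\min_{l:Z_l=0,M_l=1}Y_l+\kappa$ for $i\in\mathcal J_{\min\{n_1-k,n_{11}\}}$ and $\xi_{k,c,i}=c$ otherwise; then $\tilde p^{\square}_{\texttt t,k,c}=G_{\mathrm R,\phi}(t_{\mathrm R,\phi}(\boldsymbol Z,\tilde{\boldsymbol Y}^{\square}_{\boldsymbol Z,\boldsymbol\xi_{k,c}}(0)))$. *)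

(* Defs.v *)
From HB Require Import structures.
From mathcomp Require Import all_boot all_order all_algebra.
From mathcomp Require Import classical_sets reals constructive_ereal ereal.
Set Implicit Arguments. Unset Strict Implicit. Unset Printing Implicit Defensive.
Import Order.TTheory GRing.Theory Num.Theory.
Local Open Scope ring_scope.

Section Defs.
Variables (R : realType) (n : nat).

Definition assign := {ffun 'I_n -> bool}.

Definition cre_support (n1 : nat) : {set assign} :=
  [set z : assign | #|[set i | z i]| == n1].

Definition Pcre (n1 : nat) (E : assign -> bool) : R :=
  #|[set z in cre_support n1 | E z]|%:R / #|cre_support n1|%:R.

Definition psi (i j : 'I_n) (y y' : \bar R) : nat :=
  ((y' < y)%E || ((y == y') && (j <= i)%N) : nat).

Definition rank (y : 'I_n -> \bar R) (i : 'I_n) : nat :=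
  \sum_(j < n) psi i j (y i) (y j).

Inductive stat_kind := RankAll | RankCtrl.

Definition tstat (kd : stat_kind) (phi : nat -> R) (z : assign)
    (y : 'I_n -> \bar R) : R :=
  match kd with
  | RankAll => \sum_(i < n | z i) phi (rank y i)
  | RankCtrl => \sum_(i < n | z i) phi (\sum_(j < n | ~~ z j) psi i j (y i) (y j))
  end.

Definition Gfun (n1 : nat) (kd : stat_kind) (phi : nat -> R) (y0 : 'I_n -> R)
    (c : R) : R :=
  Pcre n1 (fun A => c <= tstat kd phi A (fun i => (y0 i)%:E)).

Inductive mech := Mg | Mmp | Mmn.

Definition mech_ok (m : mech) (M1 M0 : 'I_n -> bool) : Prop :=
  match m with
  | Mg => True
  | Mmp => forall i, M0 i ==> M1 i
  | Mmn => forall i, M1 i ==> M0 i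
  end.

Variables (Y1 Y0 : 'I_n -> R) (M1 M0 : 'I_n -> bool).

Definition Mobs (z : assign) (i : 'I_n) : bool := if z i then M1 i else M0 i.
Definition Yobs (z : assign) (i : 'I_n) : R := if z i then Y1 i else Y0 i.

Definition tildeY (m : mech) (z : assign) (delta : 'I_n -> R) (i : 'I_n) : \bar R :=
  if Mobs z i then
    (if z i then (Yobs z i - delta i)%:E else (Yobs z i)%:E)
  else match m, z i with
       | Mg, true => -oo%E
       | Mg, false => +oo%E
       | Mmp, _ => +oo%E
       | Mmn, _ => -oo%E
       end.

Definition inJ (z : assign) (i : 'I_n) : bool := z i && Mobs z i.
Definition n11 (z : assign) : nat := #|[set i | inJ z i]|.

(* position of i in the psi-ordering j_1, ..., j_{n11} of J:
   i = j_l  iff  posJ z i = l *)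
Definition posJ (z : assign) (i : 'I_n) : nat :=
  #|[set j | inJ z j && (psi i j (Yobs z i)%:E (Yobs z j)%:E == 1%N)]|.

(* J_L = {j_{n11-L+1}, ..., j_{n11}} *)
Definition inJL (z : assign) (L : nat) (i : 'I_n) : bool :=
  inJ z i && (n11 z - L < posJ z i)%N.

(* max_{l in J} Y_l and min_{l : Z_l = 0, M_l = 1} Y_l
   (empty max/min are irrelevant; by convention they give 0 via fine) *)
Definition maxJ (z : assign) : R :=
  fine (\big[maxe/-oo%E]_(l < n | inJ z l) (Yobs z l)%:E).
Definition minC (z : assign) : R :=
  fine (\big[mine/+oo%E]_(l < n | ~~ z l && Mobs z l) (Yobs z l)%:E).

Definition xi (n1 : nat) (kappa : R) (z : assign) (k : nat) (c : R) (i : 'I_n) : R :=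
  if inJL z (minn (n1 - k) (n11 z)) i then maxJ z - minC z + kappa else c.

Definition pval (n1 : nat) (kd : stat_kind) (phi : nat -> R) (y0 : 'I_n -> R)
    (m : mech) (kappa : R) (z : assign) (k : nat) (c : R) : R :=
  Gfun n1 kd phi y0 (tstat kd phi z (tildeY m z (xi n1 kappa z k c))).

(* tau_{t(k)}: k-th smallest (1-based) of {tau_i : Z_i = 1} *)
Definition tau_sorted (z : assign) (k : nat) : R :=
  nth 0 (sort <=%R [seq Y1 i - Y0 i | i <- enum 'I_n & z i]) k.-1.

End Defs.

(* Main.v *)
From HB Require Import structures.
From mathcomp Require Import all_boot all_order all_algebra.
From mathcomp Require Import classical_sets reals constructive_ereal ereal.
From mathcomp Require Import zify.
From mathcomp Require Import fingroup perm.
Set Implicit Arguments. Unset Strict Implicit. Unset Printing Implicit Defensive.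
Import Order.TTheory GRing.Theory Num.Theory.
Local Open Scope ring_scope.
From mathcomp Require Import lra.
Require Import Defs.
Section Lex.
Variables (R : realType) (n : nat).

Definition lexle (u : \bar R) (i : 'I_n) (v : \bar R) (j : 'I_n) : bool :=
  (u < v)%E || ((u == v) && (i <= j)%N).

Lemma lexle_refl u i : lexle u i u i.
Proof. by rewrite /lexle eqxx leqnn orbT. Qed.

Lemma lexle_trans u i v j w k : lexle u i v j -> lexle v j w k -> lexle u i w k.
Proof.
rewrite /lexle => /orP[uv|/andP[/eqP-> ij]] /orP[vw|/andP[/eqP<- jk]].
- by rewrite (lt_trans uv vw).
- by rewrite uv.
- by rewrite vw.
- by rewrite eqxx (leq_trans ij jk) orbT.
Qed.

Lemma lexle_total u i v j : lexle u i v j || lexle v j u i.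
Proof.
by rewrite /lexle; case: (ltgtP u v) => //= _; rewrite leq_total.
Qed.

Lemma lexle_anti u i v j : lexle u i v j -> lexle v j u i -> i = j.
Proof.
rewrite /lexle; case: (ltgtP u v) => //= _ ij ji.
by apply/val_inj/eqP; rewrite eqn_leq ij ji.
Qed.

Lemma lexle_val u i v j : lexle u i v j -> (u <= v)%E.
Proof. by rewrite /lexle => /orP[/ltW|/andP[/eqP-> _]]. Qed.

Lemma lexle_same u u' i : (u <= u')%E -> lexle u i u' i.
Proof. by rewrite /lexle le_eqVlt => /orP[->|->]; rewrite ?leqnn ?orbT. Qed.

Lemma lexle_lt u i v j : (u < v)%E -> lexle u i v j.
Proof. by rewrite /lexle => ->. Qed.

Lemma lexle_shift (a b c : R) i j :
  lexle a%:E i b%:E j -> lexle (a - c)%:E i (b - c)%:E j.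
Proof.
rewrite /lexle !lte_fin !eqe ltrBlDr subrK.
by rewrite -[a - c == b - c]/((a - c) == (b - c)) (inj_eq (addIr (- c))).
Qed.

Lemma lexle_not u i v j : ~~ lexle u i v j -> lexle v j u i.
Proof. by move=> h; move: (lexle_total u i v j); rewrite (negbTE h). Qed.

Definition cnt (P : pred 'I_n) (y : 'I_n -> \bar R) (i : 'I_n) : nat :=
  #|[set j | P j & lexle (y j) j (y i) i]|.

Lemma psi_lexle i j u v : psi i j u v = lexle v j u i.
Proof. by rewrite /psi /lexle eq_sym. Qed.

Lemma sum_psi (P : pred 'I_n) y i :
  (\sum_(j < n | P j) psi i j (y i) (y j))%N = cnt P y i.
Proof.
rewrite /cnt -sum1_card big_mkcond [RHS]big_mkcond /=.
apply: eq_bigr => j _; rewrite inE psi_lexle.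
by case: (P j); case: (lexle _ _ _ _).
Qed.

Lemma rank_cnt y i : rank y i = cnt predT y i.
Proof. by rewrite /rank -sum_psi. Qed.

Lemma cnt_mono P y i j : lexle (y j) j (y i) i -> (cnt P y j <= cnt P y i)%N.
Proof.
move=> ji; rewrite /cnt; apply: subset_leq_card; apply/fintype.subsetP => k; rewrite !inE.
by case/andP=> -> kj; exact: lexle_trans kj ji.
Qed.

Lemma cnt_split (z : 'I_n -> bool) y i :
  cnt predT y i = (cnt (fun j => z j) y i + cnt (fun j => ~~ z j) y i)%N.
Proof.
rewrite /cnt -(cardsID [set j | z j] [set j | predT j & lexle (y j) j (y i) i]).
by congr addn; apply: eq_card => j; rewrite !inE /=; case: (z j); rewrite ?andbT ?andbF.
Qed.

Lemma inj_range (X : {set 'I_n}) (f : 'I_n -> nat) a b :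
  {in X &, injective f} -> (forall x, x \in X -> a <= f x < b)%N ->
  (#|X| <= b - a)%N.
Proof.
move=> finj hr.
have := @uniq_leq_size _ [seq f x | x <- enum X] (iota a (b - a)).
rewrite size_map -cardE size_iota; apply.
  rewrite map_inj_in_uniq ?enum_uniq //.
  by move=> x y; rewrite !mem_enum; exact: finj.
move=> v /mapP[x]; rewrite mem_enum => /hr /andP[ax xb] ->.
rewrite mem_iota ax /= subnKC ?xb //; exact: leq_trans ax (ltnW xb).
Qed.

Lemma cnt_ext (P Q : pred 'I_n) y i : P =1 Q -> cnt P y i = cnt Q y i.
Proof. by move=> PQ; apply: eq_card => j; rewrite !inE PQ. Qed.

Lemma cnt_le_lexle (P : pred 'I_n) y i j : P i ->
  (cnt P y i <= cnt P y j)%N -> lexle (y i) i (y j) j.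
Proof.
move=> Pi; apply: contraTT => nij.
have ji := lexle_not nij.
rewrite -ltnNge; apply: proper_card; apply/properP; split.
  apply/fintype.subsetP => k; rewrite !inE => /andP[-> kj].
  exact: lexle_trans kj ji.
by exists i; rewrite !inE ?Pi ?lexle_refl //= (negbTE nij).
Qed.

Lemma cnt_le_n P y i : (cnt P y i <= n)%N.
Proof. by rewrite /cnt (leq_trans (max_card _)) ?card_ord. Qed.

End Lex.

Section RW.
Variables (R : realType) (n : nat).
Variables (D : {set 'I_n}) (y : 'I_n -> \bar R).
Local Notation rk := (cnt (fun j => j \in D) y).

Lemma cnt_inj : {in D &, injective rk}.
Proof.
have key : forall i j, i \in D -> j \in D -> lexle (y i) i (y j) j ->
    rk i = rk j -> i = j.
  move=> i j Di Dj ij e.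
  have sub : [set k | k \in D & lexle (y k) k (y i) i] \subset
             [set k | k \in D & lexle (y k) k (y j) j].
    apply/fintype.subsetP => k; rewrite !inE => /andP[-> ki].
    exact: lexle_trans ki ij.
  have : [set k | k \in D & lexle (y k) k (y i) i] ==
         [set k | k \in D & lexle (y k) k (y j) j].
    by rewrite eqEcard sub /= -/(cnt _ _ _) -/(cnt _ _ _) e.
  move/eqP => E; have := congr1 (fun A : {set 'I_n} => j \in A) E.
  rewrite /= !inE Dj lexle_refl /= => ji.
  by apply: lexle_anti ij ji.
move=> i j Di Dj e.
case/orP: (lexle_total (y i) i (y j) j) => h; first exact: key.
by apply/esym/key.
Qed.

Lemma cnt_ge1 i : i \in D -> (1 <= rk i)%N.
Proof. by move=> Di; apply/card_gt0P; exists i; rewrite inE Di lexle_refl. Qed.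

Lemma cnt_leD i : (rk i <= #|D|)%N.
Proof.
by apply: subset_leq_card; apply/fintype.subsetP => k; rewrite inE => /andP[].
Qed.

Lemma RW2 r : (#|[set i in D | (rk i <= r)%N]| <= r)%N.
Proof.
have := @inj_range _ [set i in D | (rk i <= r)%N] rk 1 r.+1.
rewrite subn1 /=; apply.
  by move=> i j; rewrite !inE => /andP[Di _] /andP[Dj _]; apply: cnt_inj.
by move=> x; rewrite inE => /andP[Dx xr]; rewrite cnt_ge1.
Qed.

Lemma RW1 r : (r <= #|D|)%N -> (r <= #|[set i in D | (rk i <= r)%N]|)%N.
Proof.
move=> rD.
have h1 := @inj_range _ [set i in D | (r < rk i)%N] rk r.+1 (#|D|.+1).
have h2 : (#|[set i in D | (r < rk i)%N]| <= #|D| - r)%N.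
  rewrite subSS in h1; apply: h1.
    by move=> i j; rewrite !inE => /andP[Di _] /andP[Dj _]; apply: cnt_inj.
  by move=> x; rewrite inE => /andP[Dx xr]; rewrite xr ltnS cnt_leD.
have h3 := cardsID [set i | (rk i <= r)%N] D.
have e1 : D :&: [set i | (rk i <= r)%N] = [set i in D | (rk i <= r)%N].
  by apply/setP => i; rewrite !inE.
have e2 : D :\: [set i | (rk i <= r)%N] = [set i in D | (r < rk i)%N].
  by apply/setP => i; rewrite !inE ltnNge andbC.
rewrite e1 e2 in h3.
rewrite -(leq_add2r #|[set i in D | (r < rk i)%N]|) h3.
by rewrite -[X in (_ <= X)%N](subnKC rD) leq_add2l.
Qed.

End RW.

Section LC.
Variables (R : realType) (n : nat).

Lemma telesc (phi : nat -> R) N v : (v <= N)%N ->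
  \sum_(s < N) (if (s < v)%N then phi s.+1 - phi s else 0) = phi v - phi 0.
Proof.
elim: N v => [|N IH] v.
  by rewrite leqn0 => /eqP->; rewrite big_ord0 subrr.
rewrite leq_eqVlt => /orP[/eqP->|vN].
  rewrite big_ord_recr /= ltnSn.
  have -> : \sum_(s < N) (if (s < N.+1)%N then phi s.+1 - phi s else 0) = phi N - phi 0.
    rewrite -(IH N (leqnn N)); apply: eq_bigr => s _.
    by rewrite ltn_ord ltnS ltnW.
  by rewrite addrC addrA subrK.
rewrite big_ord_recr /= ltnNge -ltnS vN /= addr0.
exact: IH.
Qed.

Lemma card_split_le (P : pred 'I_n) (g : 'I_n -> nat) s :
  (#|[set i | P i & (s < g i)%N]| + #|[set i | P i & (g i <= s)%N]|)%N =
  #|[set i | P i]|.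
Proof.
rewrite -(cardsID [set i | (s < g i)%N] [set i | P i]); congr addn;
  apply: eq_card => i; rewrite !inE //= -leqNgt andbC //.
Qed.

Lemma LC (phi : nat -> R) (P : pred 'I_n) (f f' : 'I_n -> nat) N :
  {homo phi : a b / (a <= b)%N >-> a <= b} ->
  (forall i, f i <= N)%N -> (forall i, f' i <= N)%N ->
  (forall s, #|[set i | P i & (f i <= s)%N]| <= #|[set i | P i & (f' i <= s)%N]|)%N ->
  \sum_(i | P i) phi (f' i) <= \sum_(i | P i) phi (f i).
Proof.
move=> phim fN f'N hc.
have dec : forall g : 'I_n -> nat, (forall i, g i <= N)%N ->
   \sum_(i | P i) phi (g i) = \sum_(i | P i) phi 0 +
     \sum_(s < N) (phi s.+1 - phi s) * (#|[set i | P i & (s < g i)%N]|)%:R.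
  move=> g gN.
  rewrite (eq_bigr (fun i => phi 0 + \sum_(s < N)
       (if (s < g i)%N then phi s.+1 - phi s else 0))); last first.
    by move=> i _; rewrite telesc // addrC subrK.
  rewrite big_split /=; congr (_ + _).
  rewrite exchange_big /=; apply: eq_bigr => s _.
  rewrite -big_mkcondr /= (eq_bigl (fun i => i \in [set i | P i & (s < g i)%N])); last by move=> i; rewrite inE.
  by rewrite sumr_const mulr_natr.
rewrite (dec _ f'N) (dec _ fN) lerD2l; apply: ler_sum => s _.
apply: ler_wpM2l; first by rewrite subr_ge0 phim.
rewrite ler_nat.
have e1 := card_split_le P f s; have e2 := card_split_le P f' s.
have h := hc s.
rewrite -(leq_add2r #|[set i | P i & (f' i <= s)%N]|) e2.
rewrite -e1 leq_add2l //.
Qed.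
End LC.

Section Stat.
Variables (R : realType) (n : nat).
Implicit Types (y : 'I_n -> \bar R) (z : assign n).

Local Notation actr z y := (cnt (fun j => ~~ z j) y).
Local Notation trk z y := (cnt (fun j => z j) y).

Lemma ALL z y y' :
  (forall x, #|[set i | z i & (actr z y i <= x)%N]| <= #|[set i | z i & (actr z y' i <= x)%N]|)%N ->
  forall s, (#|[set i | z i & (rank y i <= s)%N]| <= #|[set i | z i & (rank y' i <= s)%N]|)%N.
Proof.
move=> hc s.
set Dset := [set i | z i & (rank y i <= s)%N].
case: (posnP #|Dset|) => [->//|D0].
have [i1 i1D] : exists i1, i1 \in Dset by apply/card_gt0P.
case: (@arg_maxnP _ i1 (fun i => i \in Dset) (rank y) i1D) => i0 i0D i0max.
set r := #|Dset|.
have i0s : (rank y i0 <= s)%N by move: i0D; rewrite inE => /andP[].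
have rk_split : forall (yy : 'I_n -> \bar R) (i : 'I_n), rank yy i = (trk z yy i + actr z yy i)%N.
  by move=> yy i; rewrite rank_cnt (cnt_split z).
have Ti0 : trk z y i0 = r.
  apply: eq_card => j; rewrite /Dset !inE; apply/andP/andP => -[zj h]; split => //.
    by apply: leq_trans i0s; rewrite !rank_cnt; apply: cnt_mono.
  apply: (@cnt_le_lexle R n predT y j i0 isT); rewrite -!rank_cnt; apply: i0max.
  by rewrite /Dset inE zj.
set x := actr z y i0.
have rxs : (r + x <= s)%N.
  by rewrite -Ti0 /x -rk_split.
have rU : (r <= #|[set i | z i & (actr z y' i <= x)%N]|)%N.
  apply: leq_trans (hc x); apply: subset_leq_card; apply/fintype.subsetP => j.
  rewrite !inE => /andP[zj js]; rewrite zj /=; apply: cnt_mono.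
  apply: (@cnt_le_lexle R n predT y j i0 isT); rewrite -!rank_cnt; apply: i0max.
  by rewrite /Dset inE zj.
have rZ : (r <= #|[set j | z j]|)%N.
  by apply: subset_leq_card; apply/fintype.subsetP => j; rewrite !inE => /andP[].
have hW := RW1 y' rZ.
have eW : [set i in [set j | z j] | (cnt (fun j => j \in [set j | z j]) y' i <= r)%N] =
          [set i | z i & (trk z y' i <= r)%N].
  apply/setP => i; rewrite !inE; congr (_ && (_ <= _)%N).
  by apply: cnt_ext => j; rewrite inE.
rewrite eW in hW; apply: leq_trans hW _.
apply: subset_leq_card; apply/fintype.subsetP => i.
rewrite !inE => /andP[zi Ti]; rewrite zi /=.
have ax : (actr z y' i <= x)%N.
  rewrite leqNgt; apply/negP => xa.
  set U := [set j | z j & (actr z y' j <= x)%N].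
  have iU : i \notin U by rewrite inE negb_and zi /= -ltnNge xa.
  have : (#|i |: U| <= trk z y' i)%N.
    apply: subset_leq_card; apply/fintype.subsetP => j; rewrite !inE.
    case/orP => [/eqP->|/andP[zj aj]]; first by rewrite zi lexle_refl.
    rewrite zj /=; apply: lexle_not; apply/negP => ij.
    have := cnt_mono (fun j => ~~ z j) ij.
    by rewrite leqNgt (leq_ltn_trans aj xa).
  rewrite cardsU1 iU add1n => h.
  have := leq_trans (leq_ltn_trans rU (leq_trans h Ti)) (leqnn r).
  by rewrite ltnn.
by rewrite rk_split (leq_trans _ rxs) // leq_add.
Qed.

Lemma stat_le kd (phi : nat -> R) z y y' :
  {homo phi : a b / (a <= b)%N >-> a <= b} ->
  (forall x, #|[set i | z i & (actr z y i <= x)%N]| <= #|[set i | z i & (actr z y' i <= x)%N]|)%N ->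
  tstat kd phi z y' <= tstat kd phi z y.
Proof.
move=> phim hc; case: kd => /=.
  apply: (@LC _ _ phi (fun i => z i) (rank y) (rank y') n phim).
  - by move=> i; rewrite rank_cnt cnt_le_n.
  - by move=> i; rewrite rank_cnt cnt_le_n.
  exact: ALL.
rewrite (eq_bigr (fun i => phi (actr z y' i))); last by move=> i _; rewrite sum_psi.
rewrite [X in _ <= X](eq_bigr (fun i => phi (actr z y i))); last by move=> i _; rewrite sum_psi.
apply: (@LC _ _ phi (fun i => z i) (actr z y) (actr z y') n phim) => //.
- by move=> i; rewrite cnt_le_n.
- by move=> i; rewrite cnt_le_n.
Qed.

End Stat.

Section Perm.
Variables (R : realType) (n : nat).
Implicit Types (y : 'I_n -> \bar R) (A : assign n).

Lemma rank_gt0 y i : (0 < rank y i)%N.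
Proof. by rewrite rank_cnt; apply/card_gt0P; exists i; rewrite inE lexle_refl. Qed.

Lemma rank_inj y : injective (rank y).
Proof.
move=> i j e.
have := @cnt_inj R n [set: 'I_n]%SET y i j (finset.in_setT _) (finset.in_setT _).
have E k : cnt (fun j => j \in [set: 'I_n]%SET) y k = rank y k.
  by rewrite rank_cnt; apply: cnt_ext => l; rewrite finset.in_setT.
by apply; rewrite !E.
Qed.

Lemma rank_le_iff y i j : (rank y j <= rank y i)%N = lexle (y j) j (y i) i.
Proof.
apply/idP/idP; last by rewrite !rank_cnt; apply: cnt_mono.
by rewrite !rank_cnt; apply: (@cnt_le_lexle R n predT y j i isT).
Qed.

Lemma rk_lt y i : ((rank y i).-1 < n)%N.
Proof.
have h := rank_gt0 y i.
by rewrite -ltnS prednK // ltnS rank_cnt cnt_le_n.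
Qed.

Definition rko y i : 'I_n := Ordinal (rk_lt y i).

Lemma rko_inj y : injective (rko y).
Proof.
move=> i j [] e; apply: (@rank_inj y).
by rewrite -(prednK (rank_gt0 y i)) -(prednK (rank_gt0 y j)) e.
Qed.

Definition rkp y : {perm 'I_n} := perm (@rko_inj y).

Definition pim y y0 : {perm 'I_n} := (rkp y * (rkp y0)^-1)%g.

Lemma pim_rank y y0 i : rank y0 (pim y y0 i) = rank y i.
Proof.
have : rkp y0 (pim y y0 i) = rkp y i by rewrite /pim permM permKV.
rewrite !permE /rko => /(congr1 val) /= e.
by rewrite -(prednK (rank_gt0 y0 _)) e prednK // rank_gt0.
Qed.

Lemma pim_psi y y0 i j :
  psi (pim y y0 i) (pim y y0 j) (y0 (pim y y0 i)) (y0 (pim y y0 j)) =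
  psi i j (y i) (y j).
Proof. by rewrite !psi_lexle -!rank_le_iff !pim_rank. Qed.

Definition rho y y0 A : assign n := [ffun i => A ((pim y y0)^-1%g i)].

Lemma rho_inj y y0 : injective (rho y y0).
Proof.
move=> A B e; apply/ffunP => j.
have := congr1 (fun C : assign n => C (pim y y0 j)) e.
by rewrite /rho !ffunE permK.
Qed.

Lemma tstat_rho kd (phi : nat -> R) y y0 A :
  tstat kd phi (rho y y0 A) y0 = tstat kd phi A y.
Proof.
case: kd => /=.
  rewrite (reindex_inj (@perm_inj _ (pim y y0))) /=.
  apply: eq_big => i; first by rewrite /rho ffunE permK.
  by move=> _; rewrite !rank_cnt -!sum_psi; congr (phi _);
     rewrite (reindex_inj (@perm_inj _ (pim y y0))) /=;
     apply: eq_bigr => j _; rewrite pim_psi.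
rewrite (reindex_inj (@perm_inj _ (pim y y0))) /=.
apply: eq_big => i; first by rewrite /rho ffunE permK.
move=> _; congr (phi _).
rewrite (reindex_inj (@perm_inj _ (pim y y0))) /=.
apply: eq_big => j; first by rewrite /rho ffunE permK.
by move=> _; rewrite pim_psi.
Qed.

Lemma rho_supp y y0 n1 A : (rho y y0 A \in cre_support n n1) = (A \in cre_support n n1).
Proof.
rewrite /cre_support !inE.
suff -> : #|[set i | rho y y0 A i]| = #|[set i | A i]| by [].
rewrite -(card_preimset [set i | rho y y0 A i] (@perm_inj _ (pim y y0))).
by apply: eq_card => i; rewrite !inE /rho ffunE permK.
Qed.

Lemma count_inv kd (phi : nat -> R) n1 y y0 x :
  #|[set A in cre_support n n1 | x <= tstat kd phi A y]| =
  #|[set A in cre_support n n1 | x <= tstat kd phi A y0]|.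
Proof.
rewrite -[RHS](card_preimset _ (@rho_inj y y0)).
apply: eq_card => A; have := rho_supp y y0 n1 A; rewrite !inE tstat_rho => -> //.
Qed.

End Perm.

Section Valid.
Variables (R : realType) (n : nat).

Lemma valid (S : {set assign n}) (T : assign n -> R) (alpha : R) :
  (0 < #|S|)%N -> 0 <= alpha ->
  1 - alpha <= #|[set z in S | alpha < #|[set a in S | T z <= T a]|%:R / #|S|%:R]|%:R / #|S|%:R.
Proof.
move=> S0 a0.
set N := #|S|%:R.
have N0 : 0 < N :> R by rewrite ltr0n.
set G := fun z => #|[set a in S | T z <= T a]|%:R / N.
set Good := [set z in S | alpha < G z].
set Bad := [set z in S | G z <= alpha].
have hGB : (#|Good| + #|Bad|)%N = #|S|.
  rewrite -(cardsID [set z | alpha < G z] S); congr addn; apply: eq_card => z;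
    rewrite !inE //= -leNgt andbC //.
have hB : #|Bad|%:R <= alpha * N.
  case: (posnP #|Bad|) => [->|B0]; first by rewrite mulr_ge0 // ltW.
  have [b0 b0B] : exists b0, b0 \in Bad by apply/card_gt0P.
  case: (@arg_minP _ R _ b0 (fun z => z \in Bad) T b0B) => z0 z0B z0min.
  have : G z0 <= alpha by move: z0B; rewrite inE => /andP[].
  rewrite /G ler_pdivrMr // => h; apply: le_trans h; rewrite ler_nat.
  apply: subset_leq_card; apply/fintype.subsetP => z zB.
  rewrite inE z0min // andbT; by move: zB; rewrite inE => /andP[].
rewrite ler_pdivlMr // mulrBl mul1r lerBlDr.
apply: le_trans _ (lerD (lexx _) hB).
by rewrite -natrD hGB.
Qed.

End Valid.


Lemma card_enum n (P : pred 'I_n) : #|[set i | P i]| = count P (enum 'I_n).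
Proof. rewrite -size_filter cardE; apply: perm_size; apply: uniq_perm.
- exact: enum_uniq.
- by apply: filter_uniq; exact: enum_uniq.
- by move=> i; rewrite mem_enum mem_filter mem_enum inE andbT.
Qed.

Section BigE.
Variables (R : realType) (n : nat).

Lemma bigmaxe_ge (P : pred 'I_n) (F : 'I_n -> R) i : P i ->
  F i <= fine (\big[maxe/-oo%E]_(l | P l) (F l)%:E).
Proof.
move=> Pi; rewrite (bigD1 i) //=.
have : (\big[maxe/-oo%E]_(l | P l && (l != i)) (F l)%:E = -oo%E) \/
       exists r, \big[maxe/-oo%E]_(l | P l && (l != i)) (F l)%:E = r%:E.
  apply: (big_ind (fun x => x = -oo%E \/ exists r, x = r%:E)).
  - by left.
  - move=> x y [->|[r ->]] [->|[s ->]]; rewrite ?maxNye ?maxeNy.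
    + by left.
    + by right; exists s.
    + by right; exists r.
    + by right; exists (Num.max r s); rewrite EFin_max.
  - by move=> l _; right; exists (F l).
case=> [->|[r ->]]; first by rewrite maxeNy.
by rewrite -EFin_max /= le_max lexx.
Qed.

Lemma bigmine_le (P : pred 'I_n) (F : 'I_n -> R) i : P i ->
  fine (\big[mine/+oo%E]_(l | P l) (F l)%:E) <= F i.
Proof.
move=> Pi; rewrite (bigD1 i) //=.
have : (\big[mine/+oo%E]_(l | P l && (l != i)) (F l)%:E = +oo%E) \/
       exists r, \big[mine/+oo%E]_(l | P l && (l != i)) (F l)%:E = r%:E.
  apply: (big_ind (fun x => x = +oo%E \/ exists r, x = r%:E)).
  - by left.
  - move=> x y [->|[r ->]] [->|[s ->]]; rewrite ?minye ?miney.
    + by left.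
    + by right; exists s.
    + by right; exists r.
    + by right; exists (Num.min r s); rewrite EFin_min.
  - by move=> l _; right; exists (F l).
case=> [->|[r ->]]; first by rewrite miney.
by rewrite -EFin_min /= ge_min lexx.
Qed.

Lemma PU (z : assign n) (y y' : 'I_n -> \bar R) b j :
  (forall l, ~~ z l -> (y l <= y' l)%E) -> lexle (y' b) b (y j) j ->
  (cnt (fun l => ~~ z l) y' b <= cnt (fun l => ~~ z l) y j)%N.
Proof.
move=> hl hbj; apply: subset_leq_card; apply/fintype.subsetP => l; rewrite !inE.
case/andP=> zl lb; rewrite zl /=.
apply: lexle_trans (lexle_same l (hl l zl)) _.
exact: lexle_trans lb hbj.
Qed.

Lemma CD_pw (z : assign n) (y y' : 'I_n -> \bar R) :
  (forall i, z i -> cnt (fun l => ~~ z l) y' i <= cnt (fun l => ~~ z l) y i)%N ->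
  forall x, (#|[set i | z i & (cnt (fun l => ~~ z l) y i <= x)%N]| <=
             #|[set i | z i & (cnt (fun l => ~~ z l) y' i <= x)%N]|)%N.
Proof.
move=> h x; apply: subset_leq_card; apply/fintype.subsetP => i; rewrite !inE.
by case/andP=> zi hi; rewrite zi /= (leq_trans (h i zi) hi).
Qed.

End BigE.

Section Main.
Variables (R : realType) (n n1 : nat) (Y1 Y0 : 'I_n -> R) (M1 M0 : 'I_n -> bool).
Variables (m : mech) (kappa : R).
Hypothesis mok : mech_ok m M1 M0.
Implicit Types (z : assign n) (d : 'I_n -> R) (i l : 'I_n).

Definition ystar (i : 'I_n) : \bar R :=
  match m with
  | Mg => (Y0 i)%:E
  | Mmp => if M0 i then (Y0 i)%:E else +oo%E
  | Mmn => if M1 i then (Y0 i)%:E else -oo%E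
  end.

Local Notation tY := (tildeY Y1 Y0 M1 M0 m).

Lemma tY_ctrl z d l : ~~ z l ->
  tY z d l = if M0 l then (Y0 l)%:E else (if m is Mmn then -oo else +oo)%E.
Proof.
by move=> /negbTE zl; rewrite /tildeY /Mobs /Yobs zl; case: (M0 l) => //; case: m.
Qed.

Lemma tY_obs z d i : z i -> M1 i -> tY z d i = (Y1 i - d i)%:E.
Proof. by move=> zi Mi; rewrite /tildeY /Mobs /Yobs zi Mi. Qed.

Lemma tY_miss z d i : z i -> ~~ M1 i ->
  tY z d i = (if m is Mmp then +oo else -oo)%E.
Proof. by move=> zi /negbTE Mi; rewrite /tildeY /Mobs /Yobs zi Mi; case: m. Qed.

Lemma ystar_ctrl z d l : ~~ z l -> (ystar l <= tY z d l)%E.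
Proof.
move=> zl; rewrite tY_ctrl // /ystar.
case: m mok => /= hm.
- by case: (M0 l); rewrite ?lexx ?leey.
- by case: (M0 l); rewrite ?lexx ?leey.
- by have := hm l; case: (M0 l); case: (M1 l) => //= _; rewrite ?lexx ?leNye.
Qed.

Lemma ystar_miss z d i : z i -> ~~ M1 i -> (tY z d i <= ystar i)%E.
Proof.
move=> zi Mi; rewrite tY_miss // /ystar.
case: m mok => /= hm; rewrite ?leNye //.
by have := hm i; rewrite (negbTE Mi) implybF => /negbTE ->.
Qed.

Lemma ystar_obs i : M1 i -> ((Y0 i)%:E <= ystar i)%E.
Proof. by move=> Mi; rewrite /ystar; case: m; rewrite ?Mi //; case: (M0 i); rewrite ?leey. Qed.

Lemma inJ_E z i : inJ M1 M0 z i = z i && M1 i.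
Proof. by rewrite /inJ /Mobs; case: (z i). Qed.

End Main.

Section Main2.
Variables (R : realType) (n n1 : nat) (Y1 Y0 : 'I_n -> R) (M1 M0 : 'I_n -> bool).
Variables (m : mech) (kappa : R).
Hypothesis mok : mech_ok m M1 M0.
Hypothesis kpos : 0 < kappa.
Implicit Types (z : assign n) (d : 'I_n -> R) (i l : 'I_n).

Local Notation tY := (tildeY Y1 Y0 M1 M0 m).
Local Notation ys := (ystar Y0 M1 M0 m).
Local Notation xv := (xi Y1 Y0 M1 M0 n1 kappa).
Local Notation actr z y := (cnt (fun l => ~~ z l) y).

Lemma mono_c kd (phi : nat -> R) z k c c' :
  {homo phi : a b / (a <= b)%N >-> a <= b} -> c <= c' ->
  tstat kd phi z (tY z (xv z k c')) <= tstat kd phi z (tY z (xv z k c)).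
Proof.
move=> phim cc; apply: stat_le => //; apply: CD_pw => i zi; apply: PU.
  by move=> l zl; rewrite !tY_ctrl.
apply: lexle_same; case: (boolP (M1 i)) => Mi.
  rewrite !tY_obs // lee_fin /xi; case: ifP => _ //.
  by rewrite lerB.
by rewrite !tY_miss.
Qed.

Lemma count_tau z k : z \in cre_support n n1 -> (1 <= k <= n1)%N ->
  (#|[set i | z i & (tau_sorted Y1 Y0 z k < Y1 i - Y0 i)%R]| <= n1 - k)%N.
Proof.
move=> zS /andP[k1 kn].
set c := tau_sorted Y1 Y0 z k.
set s := sort <=%R [seq Y1 i - Y0 i | i <- enum 'I_n & z i].
have ss : size s = n1.
  rewrite size_sort size_map size_filter -card_enum.
  by move: zS; rewrite inE => /eqP.
have cE : #|[set i | z i & (c < Y1 i - Y0 i)%R]| = count (fun v => c < v) s.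
  have ps : perm_eq s [seq Y1 i - Y0 i | i <- enum 'I_n & z i] by rewrite perm_sort.
  rewrite card_enum (seq.permP ps) [RHS]count_map [RHS]count_filter.
  by apply: eq_count => i; rewrite /= andbC.
have sorted_s : sorted <=%R s by apply: sort_sorted; exact: le_total.
have cdef : c = nth 0 s k.-1 by [].
rewrite cE -(cat_take_drop k s) count_cat.
have -> : count (fun v => c < v) (take k s) = 0%N.
  apply/eqP; rewrite -leqn0 leqNgt -has_count; apply/hasPn => v.
  case/(nthP 0) => j; rewrite size_takel ?ss // => jk <-.
  rewrite nth_take // cdef -leNgt.
  apply: (sorted_leq_nth le_trans lexx) => //; rewrite ?inE /= ?ss; lia.
rewrite add0n; apply: leq_trans (count_size _ _) _.
by rewrite size_drop ss.
Qed.

End Main2.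

Lemma lra_aux (R : realType) (a b c d e : R) : 0 < e -> a <= b - (c - d + e) -> d <= a -> b <= c -> False.
Proof. move=> *; lra. Qed.

Lemma arith1 a b c d : (a + b = c -> a <= c - d -> d <= c -> d <= b)%N.
Proof. lia. Qed.
Lemma arith2 p b s q cc L : (p + b = s -> p + cc = q -> s <= L -> L <= q -> b <= cc)%N.
Proof. lia. Qed.
Lemma arith3 u xb cc p x b x' : (u = xb + cc -> p + xb = x -> p <= b -> b <= cc -> u <= x' -> x <= x')%N.
Proof. lia. Qed.

Section Key.
Variables (R : realType) (n n1 : nat) (Y1 Y0 : 'I_n -> R) (M1 M0 : 'I_n -> bool).
Variables (m : mech) (kappa : R).
Hypothesis mok : mech_ok m M1 M0.
Hypothesis kpos : 0 < kappa.
Implicit Types (z : assign n) (d : 'I_n -> R) (i l : 'I_n).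

Local Notation tY := (tildeY Y1 Y0 M1 M0 m).
Local Notation ys := (ystar Y0 M1 M0 m).
Local Notation xv := (xi Y1 Y0 M1 M0 n1 kappa).
Local Notation actr z y := (cnt (fun l => ~~ z l) y).

Lemma posJ_cnt z i : posJ Y1 Y0 M1 M0 z i =
  cnt (fun j => j \in [set j | inJ M1 M0 z j]) (fun j => (Yobs Y1 Y0 z j)%:E) i.
Proof.
apply: eq_card => j; rewrite !inE psi_lexle.
by case: (lexle _ _ _ _); rewrite ?andbT ?andbF.
Qed.

Lemma key z k : z \in cre_support n n1 -> (1 <= k <= n1)%N ->
  forall x, (#|[set i | z i & (actr z ys i <= x)%N]| <=
    #|[set i | z i & (actr z (tY z (xv z k (tau_sorted Y1 Y0 z k))) i <= x)%N]|)%N.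
Proof.
move=> zS kr.
set c := tau_sorted Y1 Y0 z k.
set L := minn (n1 - k) (n11 M1 M0 z).
set y' := tY z (xv z k c).
have JLJ : forall i, inJL Y1 Y0 M1 M0 z L i -> inJ M1 M0 z i by move=> i /andP[].
have Yobs_z : forall i, z i -> Yobs Y1 Y0 z i = Y1 i by rewrite /Yobs => i ->.
have hJL : forall i, inJL Y1 Y0 M1 M0 z L i ->
    y' i = (Y1 i - (maxJ Y1 Y0 M1 M0 z - minC Y1 Y0 M1 M0 z + kappa))%:E.
  move=> i iL; have := JLJ i iL; rewrite inJ_E => /andP[zi Mi].
  by rewrite /y' tY_obs // /xi iL.
have hJn : forall i, inJ M1 M0 z i -> ~~ inJL Y1 Y0 M1 M0 z L i -> y' i = (Y1 i - c)%:E.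
  move=> i; rewrite inJ_E => /andP[zi Mi] niL.
  by rewrite /y' tY_obs // /xi (negbTE niL).
have F2 : forall i j, inJL Y1 Y0 M1 M0 z L i -> inJ M1 M0 z j ->
    (actr z y' i <= actr z ys j)%N.
  move=> i j iL jJ; apply: subset_leq_card; apply/fintype.subsetP => l.
  rewrite !inE => /andP[zl li]; rewrite zl /=.
  have v := lexle_val li; rewrite (hJL i iL) in v.
  have hc : (ys l <= y' l)%E := ystar_ctrl Y1 Y0 mok (xv z k c) zl.
  have hy : y' l = -oo%E.
    move: v; rewrite /y' tY_ctrl //; case M0l: (M0 l).
      rewrite lee_fin => h.
      have h1 : minC Y1 Y0 M1 M0 z <= Y0 l.
        have Pl : ~~ z l && Mobs M1 M0 z l by rewrite /Mobs (negbTE zl) M0l.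
        have := @bigmine_le R n (fun l => ~~ z l && Mobs M1 M0 z l) (Yobs Y1 Y0 z) l Pl.
        by rewrite {2}/Yobs (negbTE zl).
      have h2 : Y1 i <= maxJ Y1 Y0 M1 M0 z.
        have := @bigmaxe_ge R n (inJ M1 M0 z) (Yobs Y1 Y0 z) i (JLJ i iL).
        by rewrite Yobs_z //; move: (JLJ i iL); rewrite inJ_E => /andP[].
      by exfalso; apply: (lra_aux kpos h h1 h2).
    by case Em: m => //=; rewrite leye_eq.
  have ys_l : ys l = -oo%E by apply/eqP; rewrite -leeNy_eq -hy.
  apply: lexle_lt; rewrite ys_l.
  move: jJ; rewrite inJ_E => /andP[_ Mj].
  exact: lt_le_trans (ltNyr _) (ystar_obs Y0 M0 m Mj).
set B := [set i | inJ M1 M0 z i && ~~ inJL Y1 Y0 M1 M0 z L i &&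
                  (c < Y1 i - Y0 i)%R].
set C := [set i | inJL Y1 Y0 M1 M0 z L i && (Y1 i - Y0 i <= c)%R].
have F1 : forall i, z i -> i \notin B -> (actr z y' i <= actr z ys i)%N.
  move=> i zi iB; case: (boolP (M1 i)) => Mi.
    have iJ : inJ M1 M0 z i by rewrite inJ_E zi Mi.
    case: (boolP (inJL Y1 Y0 M1 M0 z L i)) => iL; first exact: F2.
    move: iB; rewrite inE iJ iL /= -leNgt => fc.
    apply: PU; first by move=> l zl; apply: (ystar_ctrl Y1 Y0 mok).
    apply: lexle_same; rewrite hJn //.
    apply: le_trans (ystar_obs Y0 M0 m Mi); rewrite lee_fin.
    by rewrite lerBlDr -lerBlDl.
  apply: PU; first by move=> l zl; apply: (ystar_ctrl Y1 Y0 mok).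
  by apply: lexle_same; apply: (ystar_miss Y1 Y0 mok).
have F3 : forall b j, b \in B -> j \in C -> (actr z y' b <= actr z ys j)%N.
  move=> b j; rewrite !inE => /andP[/andP[bJ bL] _] /andP[jL fj].
  have jJ := JLJ j jL.
  move: (bJ) (jJ); rewrite !inJ_E => /andP[zb Mb] /andP[zj Mj].
  apply: PU; first by move=> l zl; apply: (ystar_ctrl Y1 Y0 mok).
  rewrite hJn //.
  have lex : lexle (Y1 b)%:E b (Y1 j)%:E j.
    rewrite -(Yobs_z b zb) -(Yobs_z j zj); apply: lexle_not; apply/negP => h.
    have := @cnt_mono R n (fun j => j \in [set j | inJ M1 M0 z j]) (fun j => (Yobs Y1 Y0 z j)%:E) b j h.
    rewrite -!posJ_cnt.
    move: bL jL; rewrite /inJL bJ jJ /= => bL jL.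
    by rewrite leqNgt (leq_trans _ jL) // ltnS leqNgt.
  apply: lexle_trans (lexle_shift c lex) _; apply: lexle_same.
  apply: le_trans (ystar_obs Y0 M0 m Mj); rewrite lee_fin.
  by rewrite lerBlDr -lerBlDl.
have F4 : (#|B| <= #|C|)%N.
  set SJ := [set i | inJ M1 M0 z i && (c < Y1 i - Y0 i)%R].
  set JL := [set i | inJL Y1 Y0 M1 M0 z L i].
  set Jset := [set i | inJ M1 M0 z i].
  have h1 : (#|SJ| <= n1 - k)%N.
    apply: leq_trans (count_tau Y1 Y0 kpos zS kr).
    apply: subset_leq_card; apply/fintype.subsetP => i; rewrite !inE inJ_E.
    by case/andP=> /andP[-> _] ->.
  have h2 : (#|SJ| <= n11 M1 M0 z)%N.
    by apply: subset_leq_card; apply/fintype.subsetP => i; rewrite !inE => /andP[].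
  have hL : (#|SJ| <= L)%N by rewrite leq_min h1 h2.
  have h3 : (L <= #|JL|)%N.
    have hr := RW2 Jset (fun j => (Yobs Y1 Y0 z j)%:E) (n11 M1 M0 z - L).
    have hd := cardsID [set i | (cnt (fun j => j \in Jset) (fun j => (Yobs Y1 Y0 z j)%:E) i <=
                  n11 M1 M0 z - L)%N] Jset.
    have e1 : Jset :&: [set i | (cnt (fun j => j \in Jset) (fun j => (Yobs Y1 Y0 z j)%:E) i <=
                  n11 M1 M0 z - L)%N] =
              [set i in Jset | (cnt (fun j => j \in Jset) (fun j => (Yobs Y1 Y0 z j)%:E) i <=
                  n11 M1 M0 z - L)%N] by apply/setP => i; rewrite !inE.
    have e2 : Jset :\: [set i | (cnt (fun j => j \in Jset) (fun j => (Yobs Y1 Y0 z j)%:E) i <=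
                  n11 M1 M0 z - L)%N] = JL.
      apply/setP => i; rewrite !inE /inJL posJ_cnt -/Jset -ltnNge andbC.
      by [].
    rewrite e1 e2 in hd.
    have Ln : (L <= n11 M1 M0 z)%N by rewrite geq_minr.
    have eJ : #|Jset| = n11 M1 M0 z by [].
    rewrite eJ in hd; exact: arith1 hd hr Ln.
  have h4 := cardsID JL SJ.
  have h5 := cardsID SJ JL.
  have e4 : SJ :\: JL = B.
    by apply/setP => i; rewrite !inE; case: (inJ _ _ _ _); case: (inJL _ _ _ _ _ _ _) => //=; rewrite ?andbF.
  have e5 : JL :\: SJ = C.
    apply/setP => i; rewrite !inE; case iL: (inJL _ _ _ _ _ _ _) => /=; rewrite ?andbF //.
    by rewrite andbT (JLJ i iL) /= -leNgt.
  rewrite e4 in h4; rewrite e5 finset.setIC in h5; exact: arith2 h4 h5 hL h3.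
move=> x.
set X := [set i | z i & (actr z ys i <= x)%N].
set X' := [set i | z i & (actr z y' i <= x)%N].
have XB : forall i, i \in X -> i \notin B -> i \in X'.
  move=> i iX iB; move: iX; rewrite !inE => /andP[zi hi]; rewrite zi /=.
  exact: leq_trans (F1 i zi iB) hi.
case: (boolP [exists b, (b \in B) && (b \in X)]) => [/existsP[b0 /andP[b0B b0X]]|noB]; last first.
  apply: subset_leq_card; apply/fintype.subsetP => i iX; apply: XB => //.
  by apply/negP => iB; move/negP: noB; apply; apply/existsP; exists i; rewrite iB iX.
case: (boolP [exists j, (j \in C) && (j \in X)]) => [/existsP[j0 /andP[j0C j0X]]|noC].
  apply: subset_leq_card; apply/fintype.subsetP => i iX.
  case: (boolP (i \in B)) => iB; last exact: XB.
  move: (iX) j0X; rewrite !inE => /andP[zi _] /andP[_ hj]; rewrite zi /=.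
  exact: leq_trans (F3 i j0 iB j0C) hj.
have sub : (X :\: B) :|: C \subset X'.
  apply/fintype.subsetP => i; rewrite !inE => /orP[/andP[iB iX]|iC].
    by have := XB i; rewrite !inE; apply => //; move: iX; rewrite inE.
  move: (iC) b0X b0B; rewrite !inE => /andP[iL _] /andP[zb hb] /andP[/andP[bJ _] _].
  have := JLJ i iL; rewrite inJ_E => /andP[zi _]; rewrite zi /=.
  exact: leq_trans (F2 i b0 iL bJ) hb.
have dis : (X :\: B) :&: C = finset.set0.
  apply/setP => i; rewrite finset.in_set0; apply/negP => /setIP[/setDP[iX _] iC].
  by move/negP: noC; apply; apply/existsP; exists i; rewrite iC iX.
have hU := cardsUI (X :\: B) C.
rewrite dis cards0 addn0 in hU.
have hX := cardsID B X.
have hXB : (#|X :&: B| <= #|B|)%N by apply: subset_leq_card; apply: subsetIr.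
have hS := subset_leq_card sub.
exact: arith3 hU hX hXB F4 hS.
Qed.
End Key.

Lemma card_supp0 (n n1 : nat) : (n1 <= n)%N -> (0 < #|cre_support n n1|)%N.
Proof.
move=> n1n; apply/card_gt0P; exists [ffun i : 'I_n => (i < n1)%N].
rewrite /cre_support inE.
have -> : [set i | [ffun i : 'I_n => (i < n1)%N] i] = (widen_ord n1n) @: [set: 'I_n1]%SET.
  apply/setP => i; rewrite inE ffunE; apply/idP/imsetP.
    by move=> lt; exists (Ordinal lt); rewrite ?finset.in_setT //; apply: val_inj.
  by case=> j _ ->; rewrite /= ltn_ord.
rewrite card_imset ?cardsT ?card_ord //; move=> a b /(congr1 val) /= e; exact: val_inj.
Qed.

Local Open Scope classical_set_scope.

Lemma upset_interval (R : realType) (P : R -> bool) :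
  (forall c c', c <= c' -> P c -> P c') ->
  let t := ereal_inf [set c%:E | c in [set c | P c]] in
  (forall c, P c <-> (t <= c%:E)%E) \/ (forall c, P c <-> (t < c%:E)%E).
Proof.
move=> mono t.
have ha : forall c, P c -> (t <= c%:E)%E.
  by move=> c Pc; apply: ereal_inf_lbound; exists c.
have hb : forall c, (t < c%:E)%E -> P c.
  move=> c /ereal_inf_lt[_ [c0 Pc0 <-]]; rewrite lte_fin => lt.
  exact: mono (ltW lt) Pc0.
move: ha hb; rewrite -/t; case: t => [r| |] ha hb.
- case Pr: (P r).
    left => c; split; first exact: ha.
    rewrite le_eqVlt => /orP[/eqP[<-]|]; first by rewrite Pr.
    exact: hb.
  right => c; split; last exact: hb.
  move=> Pc; have := ha c Pc; rewrite le_eqVlt => /orP[/eqP[e]|//].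
  by move: Pc; rewrite -e Pr.
- right => c; split; last by [].
  by move=> /ha.
- right => c; split; last exact: hb.
  by move=> _; rewrite ltNyr.
Qed.

Theorem theorem7 (R : realType) (n n1 : nat) (Y1 Y0 : 'I_n -> R)
    (M1 M0 : 'I_n -> bool) (m : mech) (kd : stat_kind) (phi : nat -> R)
    (y0 : 'I_n -> R) (kappa alpha : R) :
  (0 < n1)%N -> (n1 < n)%N ->
  mech_ok m M1 M0 ->
  {homo phi : a b / (a <= b)%N >-> a <= b} ->
  0 < kappa -> 0 < alpha < 1 ->
  let I (z : assign n) (k : nat) (c : R) : bool :=
    alpha < pval Y1 Y0 M1 M0 n1 kd phi y0 m kappa z k c in
  (* marginal validity *)
  (forall k, (1 <= k <= n1)%N ->
     1 - alpha <= Pcre R n1 (fun z => I z k (tau_sorted Y1 Y0 z k)))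
  /\
  (* one-sided interval with endpoint the infimum *)
  (forall k, (1 <= k <= n1)%N -> forall z, z \in cre_support n n1 ->
     let tauhat := ereal_inf [set c%:E | c in [set c | I z k c]] in
     (forall c : R, I z k c <-> (tauhat <= c%:E)%E) \/
     (forall c : R, I z k c <-> (tauhat < c%:E)%E))
  /\
  (* simultaneous validity *)
  1 - alpha <= Pcre R n1 (fun z =>
     [forall k : 'I_n1.+1, (0 < k)%N ==> I z k (tau_sorted Y1 Y0 z k)]).
Proof.
move=> n1pos n1n mok phim kpos /andP[a0 a1] I.
have S0 := card_supp0 (ltnW n1n).
set ys := ystar Y0 M1 M0 m.
set T := fun z : assign n => tstat kd phi z ys.
have Sp : 0 < (#|cre_support n n1|%:R : R) by rewrite ltr0n.
have Gmono : forall x x', x <= x' -> Gfun n1 kd phi y0 x' <= Gfun n1 kd phi y0 x.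
  move=> x x' xx; rewrite /Gfun /Pcre ler_pM2r ?invr_gt0 // ler_nat.
  apply: subset_leq_card; apply/fintype.subsetP => A.
  rewrite finset.in_set => /andP[AS h]; rewrite finset.in_set AS /=.
  exact: le_trans xx h.
have Gstar : forall x, Gfun n1 kd phi y0 x =
    #|[set a in cre_support n n1 | x <= T a]|%:R / #|cre_support n n1|%:R.
  by move=> x; rewrite /Gfun /Pcre (count_inv kd phi n1 (fun i => (y0 i)%:E) ys x).
have good : forall z, z \in cre_support n n1 -> alpha < Gfun n1 kd phi y0 (T z) ->
    forall k, (1 <= k <= n1)%N -> I z k (tau_sorted Y1 Y0 z k).
  move=> z zS hz k kr; rewrite /I /pval.
  apply: lt_le_trans hz _; apply: Gmono; apply: stat_le => //.
  exact: (key Y1 Y0 mok kpos zS kr).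
have main : forall E : assign n -> bool,
    (forall z, z \in cre_support n n1 -> alpha < Gfun n1 kd phi y0 (T z) -> E z) ->
    1 - alpha <= Pcre R n1 E.
  move=> E hE; apply: le_trans (valid T S0 (ltW a0)) _.
  rewrite /Pcre ler_pM2r ?invr_gt0 // ler_nat.
  apply: subset_leq_card; apply/fintype.subsetP => z.
  rewrite finset.in_set => /andP[zS h]; rewrite finset.in_set zS /=.
  by apply: hE => //; rewrite Gstar.
split; last split.
- move=> k kr; apply: main => z zS hz; exact: good.
- move=> k kr z zS tauhat; apply: upset_interval => c c' cc.
  rewrite /I /pval => h; apply: lt_le_trans h _; apply: Gmono.
  exact: mono_c.
- apply: main => z zS hz; apply/forallP => k; apply/implyP => k0.
  by apply: good => //; rewrite k0 -ltnS ltn_ord.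
Qed.
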